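(* Let $a\ge1$ and $n\ge 2a+1$, and let $\sigma\in S(n;a)$. Then $T_i(\sigma)\in S(n+1;a+1)$ for all $i$.
   Context: For $m\ge a$, $S(m;a)$ denotes the subgroup of $S_m$ generated by all permutations of $\{1,\dots,a\}$ and all permutations of $\{m-a+1,\dots,m\}$. For $\sigma\in S_n$ let $f_\sigma=x_1\cdots x_n-x_{\sigma(1)}\cdots x_{\sigma(n)}$ in the free associative algebra. For $1\le i\le n$ put $T_i(f_\sigma)=f_\sigma(x_1,\dots,x_{i-1},x_ix_{i+1},x_{i+2},\dots,x_{n+1})$; also $T_0(f_\sigma)=x_1f_\sigma(x_2,\dots,x_{n+1})$ and $T_{n+1}(f_\sigma)=f_\sigma(x_1,\dots,x_n)x_{n+1}$. Each $T_i(f_\sigma)$ equals $x_1\cdots x_{n+1}-x_{\tau(1)}\cdots x_{\tau(n+1)}$ for a unique $\tau\in S_{n+1}$, and $T_i(\sigma)$ denotes this $\tau$. *)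

(* Defs.v *)
From mathcomp Require Import all_boot all_order all_fingroup.
Set Implicit Arguments. Unset Strict Implicit. Unset Printing Implicit Defensive.

(* Permutations of {1,...,m} are represented by 'S_m acting on 'I_m = {0,...,m-1};
   the point j : 'I_m stands for the number j+1. *)

Definition Sgen (m a : nat) : {set 'S_m} :=
  [set s : 'S_m | perm_on [set j : 'I_m | j < a] s]
  :|: [set s : 'S_m | perm_on [set j : 'I_m | m - a <= j] s].

Definition Sgrp (m a : nat) : {set 'S_m} := <<Sgen m a>>%g.

(* A monomial of the free associative algebra in the letters x_1, x_2, ...
   is a word, i.e. a sequence of (1-based) variable indices. *)
Definition pword (m : nat) (s : 'S_m) : seq nat :=
  [seq (s j).+1 | j <- enum 'I_m].

(* f_sigma = x_1...x_n - x_{sigma(1)}...x_{sigma(n)}, encoded by the pair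
   (first monomial, subtracted monomial). *)
Definition fpoly (m : nat) (s : 'S_m) : seq nat * seq nat := (pword (1%g : 'S_m), pword s).

(* The operation T_i on monomials (it is an algebra map / multiplication,
   so it acts monomial by monomial):
   - i = 0 :      x_j |-> x_{j+1}, then multiply by x_1 on the left;
   - 1<=i<=n :    x_j |-> x_j (j<i), x_i |-> x_i x_{i+1}, x_j |-> x_{j+1} (j>i);
   - i = n+1 :    multiply by x_{n+1} on the right. *)
Definition Tword (n i : nat) (w : seq nat) : seq nat :=
  if i == 0 then 1 :: map S w
  else if i <= n then
    flatten [seq (if j < i then [:: j] else if j == i then [:: i; i.+1]
                  else [:: j.+1]) | j <- w]
  else w ++ [:: n.+1].

Definition Tpoly (n i : nat) (f : seq nat * seq nat) : seq nat * seq nat :=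
  (Tword n i f.1, Tword n i f.2).

(* Main.v *)
Require Import Defs.
From mathcomp Require Import all_boot all_order all_fingroup.
From mathcomp Require Import zify.

Definition Pp m b (s : 'S_m) := forall x : 'I_m,
  (x < b -> s x < b) /\ (m - b <= x -> m - b <= s x) /\
  (b <= x -> x < m - b -> s x = x :> nat).

Lemma Pp_mem m b (t : 'S_m) : b + b <= m -> Pp m b t -> t \in Sgrp m b.
Proof.
move=> hb Ht.
have inj1 : injective (fun x : 'I_m => if x < b then t x else x).
  move=> x y /=; have [hx1 _] := Ht x; have [hy1 _] := Ht y.
  case: (ltnP x b) => hx; case: (ltnP y b) => hy //.
  - by move/perm_inj.
  - by move=> e; have := hx1 hx; rewrite e; lia.
  - by move=> e; have := hy1 hy; rewrite -e; lia.
have inj2 : injective (fun x : 'I_m => if m - b <= x then t x else x).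
  move=> x y /=; have [_ [hx1 _]] := Ht x; have [_ [hy1 _]] := Ht y.
  case: (leqP (m - b) x) => hx; case: (leqP (m - b) y) => hy //.
  - by move/perm_inj.
  - by move=> e; have := hx1 hx; rewrite e; lia.
  - by move=> e; have := hy1 hy; rewrite -e; lia.
pose t1 := perm inj1; pose t2 := perm inj2.
have -> : t = (t1 * t2)%g.
  apply/permP => x; rewrite permM !permE.
  have [h1 [h2 h3]] := Ht x.
  case: (ltnP x b) => hx.
    rewrite ifF //; apply/negbTE; rewrite -ltnNge; have := h1 hx; lia.
  case: leqP => // h; apply: val_inj; exact: h3.
apply: groupM; apply: mem_gen; rewrite /Sgen inE; apply/orP.
  left; rewrite inE; apply/subsetP => x; rewrite !inE permE.
  by case: ltnP => //; rewrite eqxx.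
right; rewrite inE; apply/subsetP => x; rewrite !inE permE.
by case: leqP => //; rewrite eqxx.
Qed.

Lemma mem_Pp m b (s : 'S_m) : b + b <= m -> s \in Sgrp m b -> Pp m b s.
Proof.
move=> hb /gen_prodgP [k [c hc ->]].
apply: (big_ind (Pp m b)).
- by move=> x; rewrite perm1.
- move=> x y hx hy z; rewrite permM.
  have [a1 [a2 a3]] := hx z; have [b1 [b2 b3]] := hy (x z).
  split; [by move=> h; apply: b1; apply: a1|split; first by move=> h; apply: b2; apply: a2].
  move=> h1 h2; rewrite b3 ?a3 //.
- move=> i _; have := hc i; rewrite /Sgen; case/setUP; rewrite inE => hon x.
  + have hcl := perm_closed x hon; rewrite !inE in hcl.
    split; first by rewrite hcl.
    have ho : x \notin [set j : 'I_m | j < b] -> c i x = x by apply: out_perm.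
    rewrite inE in ho.
    split; first by move=> h; rewrite ho //; lia.
    by move=> h _; rewrite ho //; lia.
  + have hcl := perm_closed x hon; rewrite !inE in hcl.
    have ho : x \notin [set j : 'I_m | m - b <= j] -> c i x = x by apply: out_perm.
    rewrite inE in ho.
    split; first by move=> h; rewrite ho //; lia.
    split; first by rewrite hcl.
    by move=> _ h; rewrite ho //; lia.
Qed.

Lemma Pp_lift n a (s : 'S_n) (p q : 'I_n.+1) : a + a < n -> Pp n a s ->
  (p <= a /\ q <= a \/ n - a <= p /\ n - a <= q \/ (p : nat) = q) ->
  Pp n.+1 a.+1 (lift_perm p q s).
Proof.
move=> ha Hs C y.
case: (unliftP p y) => [x ->|->].
  rewrite lift_perm_lift /=.
  have [h1 [h2 h3]] := Hs x.
  move: (ltn_ord x) (ltn_ord (s x)) h1 h2 h3.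
  rewrite /bump; case: (leqP p x) => hpx; case: (leqP q (s x)) => hqx /=; rewrite -[@nat_of_ord n.+1.-1 x]/(@nat_of_ord n x) in hpx *; lia.
rewrite lift_perm_id; move: (ltn_ord p) (ltn_ord q); lia.
Qed.

Lemma flatten_single (A : eqType) (B : Type) (F : A -> seq B) (h : A -> B) (l : seq A) :
  (forall x, x \in l -> F x = [:: h x]) -> flatten (map F l) = map h l.
Proof.
elim: l => //= x l IH H; rewrite H ?mem_head // IH // => y hy.
by apply: H; rewrite in_cons hy orbT.
Qed.

Lemma word_0 n (s : 'S_n) : Tword n 0 (pword s) = pword (lift_perm ord0 ord0 s).
Proof.
rewrite /Tword /= /pword enum_ordSl /= lift_perm_id /= -!map_comp.
congr (_ :: _); apply: eq_map => x /=; rewrite lift_perm_lift lift0 //.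
Qed.

Lemma word_last n (s : 'S_n) :
  Tword n n.+1 (pword s) = pword (lift_perm ord_max ord_max s).
Proof.
rewrite /Tword /= ltnn /pword enum_ordSr map_rcons lift_perm_id /= -cats1 -!map_comp.
congr (_ ++ _); apply: eq_map => x /=.
have -> : widen_ord (leqnSn n) x = lift ord_max x by apply: val_inj; rewrite [RHS]lift_max.
by rewrite lift_perm_lift lift_max.
Qed.

Lemma word_mid n (s : 'S_n) v (hv : v < n) (k : 'I_n) (hk : s k = Ordinal hv)
  (p q : 'I_n.+1) (hp : (p : nat) = k.+1) (hq : (q : nat) = v.+1) :
  Tword n v.+1 (pword s) = pword (lift_perm p q s).
Proof.
set t := lift_perm p q s.
pose sS j := val (s (insubd k j)).
pose tS j := val (t (insubd ord0 j)).
have e1 : pword s = map (fun j => (sS j).+1) (iota 0 n).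
  rewrite /pword -val_enum_ord -map_comp; apply: eq_map => x /=.
  rewrite /sS (_ : insubd k (val x) = x) //; apply: val_inj; rewrite insubdK //.
  exact: ltn_ord.
have e2 : pword t = map (fun j => (tS j).+1) (iota 0 n.+1).
  rewrite /pword -val_enum_ord -map_comp; apply: eq_map => x /=.
  rewrite /tS (_ : insubd ord0 (val x) = x) //; apply: val_inj; rewrite insubdK //.
  exact: ltn_ord.
have key : forall j, j < n -> tS (bump p j) = bump q (sS j).
  move=> j hj; rewrite /tS /sS.
  have -> : insubd ord0 (bump p j) = lift p (insubd k j).
    apply: val_inj; rewrite /= insubdK ?insubdK //.
    rewrite /bump unfold_in /=; case: leqP => ? /=; lia.
  by rewrite lift_perm_lift.
have keyp : tS k.+1 = v.+1.
  rewrite /tS -hp (_ : insubd ord0 (val p) = p) ?lift_perm_id //.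
  apply: val_inj; rewrite insubdK //; exact: ltn_ord.
have sSk : sS k = v.
  rewrite /sS (_ : insubd k (val k) = k) ?hk //.
  apply: val_inj; rewrite insubdK //; exact: ltn_ord.
have sSn : forall j, j < n -> j != k -> sS j != v.
  move=> j hj hjk; apply/negP => /eqP e.
  have : s (insubd k j) = s k by apply: val_inj; rewrite hk /= -e.
  move/perm_inj => /(congr1 val); rewrite insubdK //.
  by move=> e'; move: hjk; rewrite e' eqxx.
have sSlt : forall j, sS j < n by move=> j; exact: ltn_ord.
rewrite e1 e2.
set r := n - k.+1.
have En : n = k + r.+1 by move: (ltn_ord k); rewrite /r; lia.
have -> : iota 0 n = iota 0 k ++ (k : nat) :: iota k.+1 r by rewrite {1}En iotaD.
have -> : iota 0 n.+1 = iota 0 k ++ (k : nat) :: k.+1 :: iota k.+2 r.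
  by rewrite (_ : n.+1 = k + r.+2) ?iotaD //; lia.
have -> : iota k.+2 r = [seq j.+1 | j <- iota k.+1 r] by rewrite -(iotaDl 1).
rewrite /Tword /= hv !map_cat flatten_cat /= -!map_comp.
have tSk : tS k = v.
  have := key k (ltn_ord k); rewrite sSk /bump hp hq ltnn /= add0n.
  by rewrite ltnn add0n.
rewrite sSk ltnn eqxx tSk keyp /=.
have fin : forall j, j < n -> j != k -> forall w, w = bump q (sS j) ->
    (if (sS j).+1 < v.+1 then [:: (sS j).+1]
     else if (sS j).+1 == v.+1 then [:: v.+1; v.+2] else [:: (sS j).+2]) = [:: w.+1].
  move=> j hjn hjk w ->; have hne := sSn j hjn hjk.
  rewrite ltnS eqSS (negbTE hne) /bump hq.
  case: (ltnP (sS j) v) => h1; case: (leqP v.+1 (sS j)) => h2 /=; congr [:: _]; lia.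
congr (_ ++ _).
  apply: flatten_single => j; rewrite mem_iota add0n => /= hj.
  have hjn : j < n by move: (ltn_ord k); lia.
  apply: fin => //; first by apply/eqP; lia.
  have := key j hjn; rewrite {1}/bump hp.
  by rewrite (_ : k.+1 <= j = false) ?add0n //; lia.
congr (_ :: _ :: _).
apply: flatten_single => j; rewrite mem_iota => /= hj.
have hjn : j < n by move: hj; rewrite /r; lia.
apply: fin => //; first by apply/eqP; lia.
have := key j hjn; rewrite {1}/bump hp.
by rewrite (_ : k.+1 <= j = true) ?add1n //; lia.
Qed.

Theorem lemma2p16 (a n : nat) (ha : 1 <= a) (hn : 2 * a + 1 <= n)
  (s : 'S_n) (hs : s \in Sgrp n a) (i : nat) (hi : i <= n.+1) :
  exists2 t : 'S_n.+1, t \in Sgrp n.+1 a.+1 & Tpoly n i (fpoly s) = fpoly t.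
Proof.
have HPn : Pp n a s by apply: mem_Pp hs; lia.
have mem : forall t, Pp n.+1 a.+1 t -> t \in Sgrp n.+1 a.+1.
  by move=> t; apply: Pp_mem; lia.
have ha2 : a + a < n by lia.
rewrite /Tpoly /fpoly /=.
case: i hi => [|v] hi.
  exists (lift_perm ord0 ord0 s).
    by apply/mem/Pp_lift => //; left; split.
  by rewrite !word_0 lift_perm1.
have [hv|hv] := ltnP v n; last first.
  have -> : v = n by lia.
  exists (lift_perm ord_max ord_max s).
    by apply/mem/Pp_lift => //; right; right.
  by rewrite !word_last lift_perm1.
pose k := (s^-1)%g (Ordinal hv).
have hk : s k = Ordinal hv by rewrite /k permKV.
pose p : 'I_n.+1 := Ordinal (ltn_ord k : k.+1 < n.+1).
pose q : 'I_n.+1 := Ordinal (hv : v.+1 < n.+1).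
exists (lift_perm p q s).
  apply/mem/Pp_lift => //.
  have [h1 [h2 h3]] := HPn k; rewrite hk /= in h1 h2 h3.
  move: (ltn_ord k); rewrite /=; lia.
rewrite (@word_mid n s v hv k hk p q) //.
rewrite (@word_mid n 1 v hv (Ordinal hv) _ q q) ?perm1 ?lift_perm1 //.
Qed.
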